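(* Let $\mathscr T$ be a functor satisfying (T1)–(T4) and $\mathfrak K=(K,\bigsqcup,\odot,{}^*,{\sim},e)$ a $\mathscr T$-based orthomodular dynamic algebra. Then (i) $K$ (with its quantale order $\sqsubseteq$) is an atomic lattice whose atoms are exactly the elements of $\mathscr T(K)$; (ii) the structure $\mathscr P(\mathscr T(\mathfrak K))=(\mathscr P(\mathscr T(K)),\bigcup,\boxdot,{}^\star,\boxtimes,\{e\})$ is a $\mathscr T$-based orthomodular dynamic algebra, and $h_{\mathfrak K}$ is an isomorphism from $\mathfrak K$ onto it.
   Context: Here $h_{\mathfrak K}\colon K\to\mathscr P(\mathscr T(K))$ is $h_{\mathfrak K}(v)=\{w\in\mathscr T(K)\mid w\sqsubseteq v\}$, and on the powerset $\mathscr P(\mathscr T(K))$: $A\boxdot B=h_{\mathfrak K}(\bigsqcup A\odot\bigsqcup B)$, $A^\star=h_{\mathfrak K}((\bigsqcup A)^* )$, $\boxtimes A=h_{\mathfrak K}({\sim}\bigsqcup A)$, joins are unions, unit $\{e\}$. An involutive unital quantale is $(Q,\bigsqcup,\odot,{}^*,e)$: $Q$ a complete join-semilattice (order $\sqsubseteq$), $\odot$ associative and distributing over arbitrary joins in each argument, $e$ a unit, ${}^*$ with $x^{**}=x$, $(x\odot y)^*=y^*\odot x^*$, $(\bigsqcup x_i)^*=\bigsqcup x_i^*$. An involutive generalized dynamic algebra (IDA) is such a quantale with ${\sim}\colon K\to K$ satisfying, for all $x,y$ and families $(x_i)$: ${\sim}(x\odot{\sim}{\sim}y)={\sim}(x\odot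 y)$; ${\sim}(\bigsqcup{\sim}{\sim}x_i)={\sim}(\bigsqcup x_i)$; $({\sim}x)^*={\sim}x$; ${\sim}{\sim}({\sim}{\sim}x\odot y)={\sim}({\sim}x\sqcup{\sim}({\sim}x\sqcup y))$. Test set $\widetilde K=\{{\sim}k\}$; $\bigvee W={\sim}{\sim}\bigsqcup W$; $w^\perp={\sim}w$; $k\preceq l$ iff $\bigvee\{k,l\}=l$; $k\bullet v={\sim}{\sim}(k\odot v)$; $k\equiv l$ iff $k\bullet w=l\bullet w$ for all $w\in\widetilde K$. IDA morphisms preserve joins, $\odot$, ${}^*$, unit, ${\sim}$ (category $\mathbb{IDA}$); isomorphisms are bijective morphisms; semi-Foulis means $(\widetilde K,\preceq,{}^\perp)$ is a complete orthomodular lattice. $\mathbb{IM}$: involutive monoids and homomorphisms. For a complete orthomodular lattice $\mathcal M$: $\pi_m(x)=m\wedge(m^\perp\vee x)$; $\mathbf{Lin}(\mathcal M)$ is the set of maps $f$ admitting $f^*$ with $f(x)\le y^\perp\iff x\le f^*(y)^\perp$, an IDA under pointwise joins, composition, ${}^*$, $\mathrm{id}$, ${\sim}f=\pi_{f(1)^\perp}$; for an involutive submonoid $L\supseteq\{\pi_m\}$, $\mathscr P(L)$ is the IDA of subsets of $L$ with union, setwise composition and involution, unit $\{\mathrm{id}\}$, ${\sim}A=\{\pi_{(\bigvee_{a\in A}a(1))^\perp}\}$. $\mathscr T\colon\mathbb{IDA}\to\mathbb{IM}$ satisfies: (T1) $\widetilde K\subseteq\mathscr T(K)\subseteq K$,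 $\mathscr T(K)$ an involutive submonoid; (T2) for semi-Foulis $\mathfrak K$ with $s=t\iff s\equiv t$ on $\mathscr T(K)$, $k\mapsto k\bullet(-)$ is an isomorphism $\mathscr T(\mathfrak K)\to\mathscr T(\mathbf{Lin}(\widetilde{\mathfrak K}))$; (T3) $f\mapsto\{f\}$ is an isomorphism $\mathscr T(\mathbf{Lin}(\mathcal M))\to\mathscr T(\mathscr P(\mathscr T(\mathbf{Lin}(\mathcal M))))$; (T4) $\mathscr T(f)$ is the restriction of $f$. A $\mathscr T$-based orthomodular dynamic algebra is an IDA with: (TODA1) $(\widetilde K,\preceq,{}^\perp)$ a complete orthomodular lattice; (TODA2) every $A$ with $\mathscr T(K)\subseteq A\subseteq K$ closed under $\odot$, ${}^*$, arbitrary joins equals $K$; (TODA3) for $S,T\subseteq\mathscr T(K)$, $\bigsqcup S=\bigsqcup T$ iff $S=T$; (TODA4) for $s,t\in\mathscr T(K)$, $s=t$ iff $s\equiv t$. *)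

(* Defs.v *)
From Stdlib Require Import ClassicalEpsilon.
Set Implicit Arguments.
Unset Strict Implicit.

Definition image {A B : Type} (f : A -> B) (S : A -> Prop) : B -> Prop :=
  fun y => exists x, S x /\ y = f x.
Definition pairset {A : Type} (a b : A) : A -> Prop := fun x => x = a \/ x = b.
Definition is_lub {A : Type} (le : A -> A -> Prop) (S : A -> Prop) (x : A) : Prop :=
  (forall y, S y -> le y x) /\ (forall z, (forall y, S y -> le y z) -> le x z).
Definition is_glb {A : Type} (le : A -> A -> Prop) (S : A -> Prop) (x : A) : Prop :=
  (forall y, S y -> le x y) /\ (forall z, (forall y, S y -> le z y) -> le z x).
Definition partial_order {A : Type} (le : A -> A -> Prop) : Prop :=
  (forall x, le x x) /\ (forall x y z, le x y -> le y z -> le x z) /\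
  (forall x y, le x y -> le y x -> x = y).
Definition bijective {A B : Type} (f : A -> B) : Prop :=
  (forall a b, f a = f b -> a = b) /\ (forall y, exists x, f x = y).

Record ida := IDA {
  car :> Type;
  le : car -> car -> Prop;
  sup : (car -> Prop) -> car;
  mul : car -> car -> car;
  star : car -> car;
  neg : car -> car;
  one : car }.
Arguments le {i} _ _.
Arguments sup {i} _.
Arguments mul {i} _ _.
Arguments star {i} _.
Arguments neg {i} _.
Arguments one i : clear implicits.

Definition is_IDA (D : ida) : Prop :=
  partial_order (@le D) /\
  (forall S : D -> Prop, is_lub le S (sup S)) /\
  (forall x y z : D, mul x (mul y z) = mul (mul x y) z) /\
  (forall x : D, mul (one D) x = x /\ mul x (one D) = x) /\
  (forall (x : D) S, mul x (sup S) = sup (image (mul x) S)) /\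
  (forall (x : D) S, mul (sup S) x = sup (image (fun y => mul y x) S)) /\
  (forall x : D, star (star x) = x) /\
  (forall x y : D, star (mul x y) = mul (star y) (star x)) /\
  (forall S : D -> Prop, star (sup S) = sup (image star S)) /\
  (forall x y : D, neg (mul x (neg (neg y))) = neg (mul x y)) /\
  (forall S : D -> Prop, neg (sup (image (fun x => neg (neg x)) S)) = neg (sup S)) /\
  (forall x : D, star (neg x) = neg x) /\
  (forall x y : D, neg (neg (mul (neg (neg x)) y)) =
                   neg (sup (pairset (neg x) (neg (sup (pairset (neg x) y)))))).

Definition is_test {D : ida} (x : D) : Prop := exists k, x = neg k.
Definition vee {D : ida} (W : D -> Prop) : D := neg (neg (sup W)).
Definition tle {D : ida} (k l : D) : Prop := vee (pairset k l) = l.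
Definition bullet {D : ida} (k v : D) : D := neg (neg (mul k v)).
Definition equiv {D : ida} (k l : D) : Prop :=
  forall w : D, is_test w -> bullet k w = bullet l w.

Definition ida_morphism {D1 D2 : ida} (f : D1 -> D2) : Prop :=
  (forall S : D1 -> Prop, f (sup S) = sup (image f S)) /\
  (forall x y, f (mul x y) = mul (f x) (f y)) /\
  (forall x, f (star x) = star (f x)) /\
  f (one D1) = one D2 /\
  (forall x, f (neg x) = neg (f x)).
Definition ida_iso {D1 D2 : ida} (f : D1 -> D2) : Prop :=
  ida_morphism f /\ bijective f.

Definition im_iso {D1 D2 : ida} {P1 : D1 -> Prop} {P2 : D2 -> Prop}
  (phi : {x : D1 | P1 x} -> {y : D2 | P2 y}) : Prop :=
  bijective phi /\
  (forall s t st : {x : D1 | P1 x}, proj1_sig st = mul (proj1_sig s) (proj1_sig t) ->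
     proj1_sig (phi st) = mul (proj1_sig (phi s)) (proj1_sig (phi t))) /\
  (forall s s' : {x : D1 | P1 x}, proj1_sig s' = star (proj1_sig s) ->
     proj1_sig (phi s') = star (proj1_sig (phi s))) /\
  (forall u : {x : D1 | P1 x}, proj1_sig u = one D1 -> proj1_sig (phi u) = one D2).

Record oml := OML {
  ocar :> Type;
  ole : ocar -> ocar -> Prop;
  ocompl : ocar -> ocar }.
Arguments ole {o} _ _.
Arguments ocompl {o} _.

(* chosen lubs (d is any element, used only to witness inhabitation) *)
Definition osup {M : oml} (S : M -> Prop) (d : M) : M :=
  epsilon (inhabits d) (is_lub ole S).
Definition ojoin {M : oml} (a b : M) : M := osup (pairset a b) a.
Definition omeet {M : oml} (a b : M) : M := ocompl (ojoin (ocompl a) (ocompl b)).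
Definition otop {M : oml} (d : M) : M := osup (fun _ => True) d.

Definition is_cOML (M : oml) : Prop :=
  partial_order (@ole M) /\
  (forall S : M -> Prop, exists x, is_lub ole S x) /\
  (forall x : M, ocompl (ocompl x) = x) /\
  (forall x y : M, ole x y -> ole (ocompl y) (ocompl x)) /\
  (forall x z : M, ole z (ojoin x (ocompl x))) /\
  (forall x y : M, ole x y -> y = ojoin x (omeet y (ocompl x))).

Definition sasaki {M : oml} (m x : M) : M := omeet m (ojoin (ocompl m) x).

Definition adjoint_of {M : oml} (f g : M -> M) : Prop :=
  forall x y, ole (f x) (ocompl y) <-> ole x (ocompl (g y)).
Definition has_adjoint {M : oml} (f : M -> M) : Prop := exists g, adjoint_of f g.

Lemma id_has_adjoint (M : oml) : has_adjoint (fun x : M => x).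
Proof. exists (fun x => x); intros x y; tauto. Qed.

Definition Lincar (M : oml) : Type := {f : M -> M | has_adjoint f}.

(* packaging a map as an element of Lin(M); the fallback (identity) is
   never used on maps that are known to be adjointable *)
Definition mkLin {M : oml} (g : M -> M) : Lincar M :=
  match excluded_middle_informative (has_adjoint g) with
  | left H => exist _ g H
  | right _ => exist _ (fun x => x) (id_has_adjoint M)
  end.

Definition Lin_sup {M : oml} (F : Lincar M -> Prop) : Lincar M :=
  mkLin (fun x => osup (fun z => exists f, F f /\ z = proj1_sig f x) x).
Definition Lin_mul {M : oml} (f g : Lincar M) : Lincar M :=
  mkLin (fun x => proj1_sig f (proj1_sig g x)).
Definition Lin_star {M : oml} (f : Lincar M) : Lincar M :=
  mkLin (epsilon (inhabits (fun x : M => x)) (adjoint_of (proj1_sig f))).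
Definition Lin_neg {M : oml} (f : Lincar M) : Lincar M :=
  mkLin (fun x => sasaki (ocompl (proj1_sig f (otop x))) x).

Definition Lin (M : oml) : ida :=
  {| car := Lincar M;
     le := fun f g => forall x, ole (proj1_sig f x) (proj1_sig g x);
     sup := Lin_sup;
     mul := Lin_mul;
     star := Lin_star;
     neg := Lin_neg;
     one := mkLin (fun x => x) |}.

Definition PLin (M : oml) (L : Lin M -> Prop) : ida :=
  {| car := {f : Lin M | L f} -> Prop;
     le := fun A B => forall a, A a -> B a;
     sup := fun F a => exists A, F A /\ A a;
     mul := fun A B c => exists a b, A a /\ B b /\
                          proj1_sig c = mul (proj1_sig a) (proj1_sig b);
     star := fun A c => exists a, A a /\ proj1_sig c = star (proj1_sig a);
     neg := fun A c => proj1_sig c =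
        mkLin (fun x => sasaki (ocompl
           (osup (fun z => exists a, A a /\ z = proj1_sig (proj1_sig a) (otop x)) x)) x);
     one := fun c => proj1_sig c = one (Lin M) |}.

Arguments PLin : clear implicits.

Definition tests_neg {D : ida} (a : {x : D | is_test x}) : {x : D | is_test x} :=
  exist _ (neg (proj1_sig a)) (ex_intro _ (proj1_sig a) eq_refl).
Definition tests_oml (D : ida) : oml :=
  {| ocar := {x : D | is_test x};
     ole := fun a b => tle (proj1_sig a) (proj1_sig b);
     ocompl := tests_neg |}.
Definition semi_Foulis (D : ida) : Prop := is_cOML (tests_oml D).

Definition bullet_test {D : ida} (k : D) (w : tests_oml D) : tests_oml D :=
  exist _ (bullet k (proj1_sig w)) (ex_intro _ (neg (mul k (proj1_sig w))) eq_refl).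

(* The functor T : IDA -> IM, described by its object part             *)
(* T D : subset of D (by (T1) T(K) is a subset of K, and by (T4) T(f)  *)
(* is the restriction of f).  Its values on non-IDA data are irrelevant.*)
Definition Tfunctor := forall D : ida, D -> Prop.

Definition T_T1 (T : Tfunctor) : Prop :=
  forall D : ida, is_IDA D ->
    (forall x : D, is_test x -> T D x) /\ T D (one D) /\
    (forall x y : D, T D x -> T D y -> T D (mul x y)) /\
    (forall x : D, T D x -> T D (star x)).

(* functoriality + (T4): the restriction of any morphism maps T(D1) into T(D2) *)
Definition T_T4 (T : Tfunctor) : Prop :=
  forall (D1 D2 : ida) (f : D1 -> D2), is_IDA D1 -> is_IDA D2 -> ida_morphism f ->
    forall x, T D1 x -> T D2 (f x).

Definition T_T2 (T : Tfunctor) : Prop :=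
  forall D : ida, is_IDA D -> semi_Foulis D ->
    (forall s t : D, T D s -> T D t -> (s = t <-> equiv s t)) ->
    exists phi : {k : D | T D k} -> {f : Lin (tests_oml D) | T (Lin (tests_oml D)) f},
      (forall k w, proj1_sig (proj1_sig (phi k)) w = bullet_test (proj1_sig k) w) /\
      im_iso phi.

Definition T_T3 (T : Tfunctor) : Prop :=
  forall M : oml, is_cOML M ->
    exists phi : {f : Lin M | T (Lin M) f} ->
                 {A : PLin M (T (Lin M)) | T (PLin M (T (Lin M))) A},
      (forall f g, proj1_sig (phi f) g <-> g = f) /\ im_iso phi.

Definition is_TODA (T : Tfunctor) (D : ida) : Prop :=
  is_IDA D /\
  is_cOML (tests_oml D) /\
  (forall A : D -> Prop, (forall x, T D x -> A x) ->
                (forall x y, A x -> A y -> A (mul x y)) ->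
                (forall x, A x -> A (star x)) ->
                (forall S, (forall x, S x -> A x) -> A (sup S)) ->
                forall x, A x) /\
  (forall S S' : D -> Prop, (forall x, S x -> T D x) -> (forall x, S' x -> T D x) ->
                (sup S = sup S' <-> (forall x, S x <-> S' x))) /\
  (forall s t : D, T D s -> T D t -> (s = t <-> equiv s t)).

Definition hK (T : Tfunctor) (K : ida) (v : K) : {x : K | T K x} -> Prop :=
  fun w => le (proj1_sig w) v.
Definition ssup (T : Tfunctor) (K : ida) (A : {x : K | T K x} -> Prop) : K :=
  sup (fun x => exists a, A a /\ x = proj1_sig a).
Arguments hK : clear implicits.
Arguments ssup : clear implicits.

Definition PT (T : Tfunctor) (K : ida) : ida :=
  {| car := {x : K | T K x} -> Prop;
     le := fun A B => forall a, A a -> B a;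
     sup := fun F a => exists A, F A /\ A a;
     mul := fun A B => hK T K (mul (ssup T K A) (ssup T K B));
     star := fun A => hK T K (star (ssup T K A));
     neg := fun A => hK T K (neg (ssup T K A));
     one := fun c => proj1_sig c = one K |}.
Arguments PT : clear implicits.


Definition bot (D : ida) : D := sup (fun _ => False).
Definition is_atom {D : ida} (a : D) : Prop :=
  a <> bot D /\ forall y, le y a -> y = bot D \/ y = a.
Definition is_lattice (D : ida) : Prop :=
  partial_order (@le D) /\
  (forall x y : D, exists z, is_lub le (pairset x y) z) /\
  (forall x y : D, exists z, is_glb le (pairset x y) z).
Definition is_atomic (D : ida) : Prop :=
  forall x : D, x <> bot D -> exists a, is_atom a /\ le a x.

(* Main.v *)
Require Import Defs.
From Stdlib Require Import ClassicalEpsilon FunctionalExtensionality PropExtensionality ProofIrrelevance Classical.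

Lemma pred_ext {A : Type} (P Q : A -> Prop) : (forall x, P x <-> Q x) -> P = Q.
Proof. intro H; apply functional_extensionality; intro x; apply propositional_extensionality; auto. Qed.

Lemma sig_eq {A : Type} {P : A -> Prop} (a b : {x : A | P x}) : proj1_sig a = proj1_sig b -> a = b.
Proof. destruct a as [a pa], b as [b pb]; simpl; intro H; subst; f_equal; apply proof_irrelevance. Qed.

Lemma image_comm {A B : Type} (f : A -> B) (h : A -> A) (h' : B -> B) S :
  (forall x, f (h x) = h' (f x)) -> image f (image h S) = image h' (image f S).
Proof.
  intro H; apply pred_ext; intro y; split.
  - intros [x [[z [Hz ->]] ->]]. exists (f z); split; [exists z; auto | auto].
  - intros [x [[z [Hz ->]] ->]]. exists (h z); split; [exists z; auto | auto].
Qed.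

Lemma image_pair {A B : Type} (f : A -> B) a b : image f (pairset a b) = pairset (f a) (f b).
Proof.
  apply pred_ext; intro y; unfold image, pairset; split.
  - intros [x [[-> | ->] ->]]; auto.
  - intros [-> | ->]; eauto.
Qed.


Lemma le_refl {D : ida} (HI : is_IDA D) (x : D) : le x x.
Proof. destruct HI as [[H _] _]; auto. Qed.
Lemma le_trans {D : ida} (HI : is_IDA D) (x y z : D) : le x y -> le y z -> le x z.
Proof. destruct HI as [[_ [H _]] _]; eauto. Qed.
Lemma le_anti {D : ida} (HI : is_IDA D) (x y : D) : le x y -> le y x -> x = y.
Proof. destruct HI as [[_ [_ H]] _]; eauto. Qed.
Lemma sup_ub {D : ida} (HI : is_IDA D) (S : D -> Prop) y : S y -> le y (sup S).
Proof. destruct HI as [_ [H _]]; apply (H S). Qed.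
Lemma sup_least {D : ida} (HI : is_IDA D) (S : D -> Prop) z :
  (forall y, S y -> le y z) -> le (sup S) z.
Proof. destruct HI as [_ [H _]]; apply (H S). Qed.
Lemma sup_single {D : ida} (HI : is_IDA D) (x : D) : sup (fun y => y = x) = x.
Proof.
  apply le_anti; auto.
  - apply sup_least; auto; intros y ->; apply le_refl; auto.
  - apply sup_ub; auto.
Qed.
Lemma sup_pair_le {D : ida} (HI : is_IDA D) (a a' : D) : le a a' -> sup (pairset a a') = a'.
Proof.
  intro H; apply le_anti; auto.
  - apply sup_least; auto; intros y [-> | ->]; auto; apply le_refl; auto.
  - apply sup_ub; auto; right; auto.
Qed.
Lemma mul_mono_l {D : ida} (HI : is_IDA D) (a a' b : D) : le a a' -> le (mul a b) (mul a' b).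
Proof.
  intro H. rewrite <- (sup_pair_le HI _ _ H).
  pose proof HI as HI'.
  destruct HI' as (_&_&_&_&_&Hdr&_).
  rewrite Hdr. apply sup_ub; auto. exists a; split; auto. left; auto.
Qed.
Lemma mul_mono_r {D : ida} (HI : is_IDA D) (a a' b : D) : le a a' -> le (mul b a) (mul b a').
Proof.
  intro H. rewrite <- (sup_pair_le HI _ _ H).
  pose proof HI as HI'.
  destruct HI' as (_&_&_&_&Hdl&_).
  rewrite Hdl. apply sup_ub; auto. exists a; split; auto. left; auto.
Qed.

Lemma ida_transport {D1 D2 : ida} (f : D1 -> D2) (g : D2 -> D1) (HI : is_IDA D1)
  (gf : forall x, g (f x) = x) (fg : forall u, f (g u) = u) (Hm : ida_morphism f)
  (Hle : forall x y, le x y <-> le (f x) (f y)) : is_IDA D2.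
Proof.
  destruct Hm as (Hsup & Hmul & Hstar & Hone & Hneg).
  assert (Himg : forall S : D2 -> Prop, S = image f (image g S)).
  { intro S; apply pred_ext; intro u; split.
    - intro H; exists (g u); split; [exists u; auto | auto].
    - intros [x [[v [Hv ->]] ->]]; rewrite fg; auto. }
  assert (Hsurj : forall u, exists a, u = f a) by (intro u; exists (g u); auto).
  destruct HI as (Hpo&Hlub&Hass&Hunit&Hdl&Hdr&Hss&Hsm&Hssup&Hn1&Hn2&Hn3&Hn4).
  Local Ltac push f Hmul Hstar Hneg Hsup :=
    repeat (rewrite <- Hmul || rewrite <- Hstar || rewrite <- Hneg || rewrite <- (image_pair f) || rewrite <- Hsup).
  split.
  { destruct Hpo as (H1&H2&H3). split; [|split].
    - intro u; destruct (Hsurj u) as [a ->]; apply Hle; apply H1.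
    - intros u v w; destruct (Hsurj u) as [a ->]; destruct (Hsurj v) as [b ->];
        destruct (Hsurj w) as [c ->]; rewrite <- !Hle; eauto.
    - intros u v; destruct (Hsurj u) as [a ->]; destruct (Hsurj v) as [b ->];
        rewrite <- !Hle; intros; f_equal; auto. }
  split.
  { intro S; rewrite (Himg S); generalize (image g S) as S1; intro S1; rewrite <- Hsup. split.
    - intros y [x [Hx ->]]; apply Hle; apply Hlub; auto.
    - intros z Hz; destruct (Hsurj z) as [c ->]; apply Hle; apply Hlub; intros x Hx;
        apply Hle; apply Hz; exists x; auto. }
  split.
  { intros x y z; destruct (Hsurj x) as [a ->]; destruct (Hsurj y) as [b ->];
        destruct (Hsurj z) as [c ->]; push f Hmul Hstar Hneg Hsup; f_equal; auto. }
  split.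
  { intros x; destruct (Hsurj x) as [a ->]; rewrite <- Hone; push f Hmul Hstar Hneg Hsup;
    split; f_equal; apply Hunit. }
  split.
  { intros x S; destruct (Hsurj x) as [a ->]; rewrite (Himg S); generalize (image g S) as S1;
    intro S1; rewrite <- Hsup, <- Hmul, Hdl, Hsup; f_equal; apply image_comm; auto. }
  split.
  { intros x S; destruct (Hsurj x) as [a ->]; rewrite (Himg S); generalize (image g S) as S1;
    intro S1; rewrite <- Hsup, <- Hmul, Hdr, Hsup; f_equal; apply image_comm; auto. }
  split.
  { intros x; destruct (Hsurj x) as [a ->]; push f Hmul Hstar Hneg Hsup; f_equal; auto. }
  split.
  { intros x y; destruct (Hsurj x) as [a ->]; destruct (Hsurj y) as [b ->];
    push f Hmul Hstar Hneg Hsup; f_equal; auto. }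
  split.
  { intros S; rewrite (Himg S); generalize (image g S) as S1;
    intro S1; rewrite <- Hsup, <- Hstar, Hssup, Hsup; f_equal; apply image_comm; auto. }
  split.
  { intros x y; destruct (Hsurj x) as [a ->]; destruct (Hsurj y) as [b ->];
    push f Hmul Hstar Hneg Hsup; f_equal; auto. }
  split.
  { intros S; rewrite (Himg S); generalize (image g S) as S1; intro S1.
    rewrite <- (image_comm f (fun x => neg (neg x)) (fun x => neg (neg x)) S1)
      by (intro; rewrite !Hneg; reflexivity).
    push f Hmul Hstar Hneg Hsup; f_equal; auto. }
  split.
  { intros x; destruct (Hsurj x) as [a ->]; push f Hmul Hstar Hneg Hsup; f_equal; auto. }
  { intros x y; destruct (Hsurj x) as [a ->]; destruct (Hsurj y) as [b ->];
    push f Hmul Hstar Hneg Hsup; f_equal; auto. }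
Qed.

Lemma inv_morphism {D1 D2 : ida} (f : D1 -> D2) (g : D2 -> D1)
  (gf : forall x, g (f x) = x) (fg : forall u, f (g u) = u) (Hm : ida_morphism f) :
  ida_morphism g.
Proof.
  destruct Hm as (Hsup & Hmul & Hstar & Hone & Hneg).
  assert (Himg : forall S : D2 -> Prop, S = image f (image g S)).
  { intro S; apply pred_ext; intro u; split.
    - intro H; exists (g u); split; [exists u; auto | auto].
    - intros [x [[v [Hv ->]] ->]]; rewrite fg; auto. }
  split; [|split; [|split; [|split]]].
  - intro S. rewrite <- (gf (sup (image g S))), Hsup, <- Himg; auto.
  - intros u v. rewrite <- (gf (mul (g u) (g v))), Hmul, !fg; auto.
  - intros u. rewrite <- (gf (star (g u))), Hstar, !fg; auto.
  - rewrite <- Hone, gf; auto.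
  - intros u. rewrite <- (gf (neg (g u))), Hneg, !fg; auto.
Qed.

Lemma lub_unique {M : oml} (Hpo : partial_order (@ole M)) (S : M -> Prop) x y :
  is_lub ole S x -> is_lub ole S y -> x = y.
Proof.
  destruct Hpo as (_&_&H3); intros [A B] [C E]; apply H3; [apply B | apply E]; auto.
Qed.

Lemma ojoin_lub {M : oml} (HM : is_cOML M) (a b : M) : is_lub ole (pairset a b) (ojoin a b).
Proof. unfold ojoin, osup; apply epsilon_spec; apply HM. Qed.

Lemma cOML_transport {M1 M2 : oml} (g : M1 -> M2) (h : M2 -> M1)
  (hg : forall x, h (g x) = x) (gh : forall u, g (h u) = u)
  (Hle : forall x y, ole x y <-> ole (g x) (g y))
  (Hc : forall x, g (ocompl x) = ocompl (g x)) : is_cOML M1 -> is_cOML M2.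
Proof.
  intro HM. pose proof HM as HM'. destruct HM' as (Hpo & Hlub & Hcc & Hanti & H5 & H6).
  assert (Hsurj : forall u, exists a, u = g a) by (intro u; exists (h u); auto).
  assert (Hpo2 : partial_order (@ole M2)).
  { destruct Hpo as (H1&H2&H3). split; [|split].
    - intro u; destruct (Hsurj u) as [a ->]; apply Hle; apply H1.
    - intros u v w; destruct (Hsurj u) as [a ->]; destruct (Hsurj v) as [b ->];
        destruct (Hsurj w) as [c ->]; rewrite <- !Hle; eauto.
    - intros u v; destruct (Hsurj u) as [a ->]; destruct (Hsurj v) as [b ->];
        rewrite <- !Hle; intros; f_equal; auto. }
  assert (Hmap : forall S1 x, is_lub ole S1 x -> is_lub ole (image g S1) (g x)).
  { intros S1 x [A B]; split.
    - intros y [z [Hz ->]]; apply Hle; auto.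
    - intros z Hz; destruct (Hsurj z) as [c ->]; apply Hle; apply B; intros y Hy;
        apply Hle; apply Hz; exists y; auto. }
  assert (Hlub2 : forall S : M2 -> Prop, exists x, is_lub ole S x).
  { intro S. destruct (Hlub (image h S)) as [x Hx]. exists (g x).
    replace S with (image g (image h S)); auto.
    apply pred_ext; intro u; split.
    - intros [x' [[v [Hv ->]] ->]]; rewrite gh; auto.
    - intro H; exists (h u); split; [exists u; auto | auto]. }
  assert (HM2 : forall a b : M2, is_lub ole (pairset a b) (ojoin a b)).
  { intros a b; unfold ojoin, osup; apply epsilon_spec; apply Hlub2. }
  assert (Hjoin : forall a b, g (ojoin a b) = ojoin (g a) (g b)).
  { intros a b. apply (lub_unique Hpo2 (pairset (g a) (g b))); auto.
    rewrite <- image_pair. apply Hmap. apply ojoin_lub; auto. }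
  assert (Hmeet : forall a b, g (omeet a b) = omeet (g a) (g b)).
  { intros a b; unfold omeet; rewrite Hc, Hjoin, !Hc; auto. }
  split; [auto|split; [auto|split; [|split; [|split]]]].
  - intro u; destruct (Hsurj u) as [a ->]; rewrite <- !Hc, Hcc; auto.
  - intros u v; destruct (Hsurj u) as [a ->]; destruct (Hsurj v) as [b ->];
      rewrite <- !Hc, <- !Hle; apply Hanti.
  - intros u v; destruct (Hsurj u) as [a ->]; destruct (Hsurj v) as [b ->];
      rewrite <- Hc, <- Hjoin, <- Hle; apply H5.
  - intros u v; destruct (Hsurj u) as [a ->]; destruct (Hsurj v) as [b ->];
      rewrite <- Hle; intro H; rewrite <- Hc, <- Hmeet, <- Hjoin; f_equal; auto.
Qed.

Lemma toda_transport (T : Tfunctor) (HT4 : T_T4 T) {D1 D2 : ida} (f : D1 -> D2) (g : D2 -> D1)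
  (HK : is_TODA T D1)
  (gf : forall x, g (f x) = x) (fg : forall u, f (g u) = u) (Hm : ida_morphism f)
  (Hle : forall x y, le x y <-> le (f x) (f y)) : is_TODA T D2.
Proof.
  pose proof HK as HK'. destruct HK' as (HI & H1 & H2 & H3 & H4).
  pose proof (ida_transport f g HI gf fg Hm Hle) as HI2.
  pose proof (inv_morphism f g gf fg Hm) as Hgm.
  assert (HTf : forall x, T D1 x -> T D2 (f x)) by (apply HT4; auto).
  assert (HTg : forall x, T D2 x -> T D1 (g x)) by (apply HT4; auto).
  pose proof Hm as Hm'. destruct Hm' as (Hsup & Hmul & Hstar & Hone & Hneg).
  assert (finj : forall x y, f x = f y <-> x = y).
  { intros x y; split; [intro E; apply (f_equal g) in E; rewrite !gf in E; auto | intros ->; auto]. }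
  assert (Himg : forall S : D2 -> Prop, S = image f (image g S)).
  { intro S; apply pred_ext; intro u; split.
    - intro H; exists (g u); split; [exists u; auto | auto].
    - intros [x [[v [Hv ->]] ->]]; rewrite fg; auto. }
  assert (test_f : forall x, is_test x -> is_test (f x)).
  { intros x [k ->]; exists (f k); auto. }
  assert (test_g : forall x, is_test x -> is_test (g x)).
  { intros x [k ->]; exists (g k); apply Hgm. }
  split; [exact HI2|split; [|split; [|split]]].
  - pose (tf := fun a : tests_oml D1 => (exist _ (f (proj1_sig a)) (test_f _ (proj2_sig a)) : tests_oml D2)).
    pose (tg := fun a : tests_oml D2 => (exist _ (g (proj1_sig a)) (test_g _ (proj2_sig a)) : tests_oml D1)).
    apply (cOML_transport tf tg); auto.
    + intro x; apply sig_eq; simpl; auto.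
    + intro x; apply sig_eq; simpl; auto.
    + intros [a pa] [b pb]; simpl; unfold tle, vee. split.
      * intro H. rewrite <- (image_pair f), <- Hsup, <- !Hneg, H; auto.
      * intro H. apply finj. rewrite <- H. rewrite <- (image_pair f), <- Hsup, <- !Hneg; auto.
    + intros [a pa]; apply sig_eq; simpl; auto.
  - intros A HA HAm HAs HAsup u. rewrite <- (fg u).
    apply (H2 (fun x => A (f x))).
    + intros x Tx; apply HA; apply HTf; auto.
    + intros x y; rewrite Hmul; auto.
    + intros x; rewrite Hstar; auto.
    + intros S HS; rewrite Hsup; apply HAsup; intros y [x [Hx ->]]; auto.
  - intros S S' HS HS'.
    assert (HS1 : forall x, image g S x -> T D1 x) by (intros x [y [Hy ->]]; auto).
    assert (HS1' : forall x, image g S' x -> T D1 x) by (intros x [y [Hy ->]]; auto).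
    rewrite (Himg S), (Himg S').
    revert HS1 HS1'; generalize (image g S) as S1; generalize (image g S') as S1';
      intros S1' S1 HS1 HS1'.
    rewrite <- !Hsup, finj, (H3 S1 S1' HS1 HS1'). split.
    + intros H x; split; intros [y [Hy ->]]; exists y; split; auto; apply H; auto.
    + intros H x; split; intro Hx.
      * destruct (proj1 (H (f x)) (ex_intro _ x (conj Hx eq_refl))) as [y [Hy E]].
        apply finj in E; subst; auto.
      * destruct (proj2 (H (f x)) (ex_intro _ x (conj Hx eq_refl))) as [y [Hy E]].
        apply finj in E; subst; auto.
  - intros s t Ts Tt. rewrite <- (fg s), <- (fg t).
    pose proof (HTg _ Ts) as Ta; pose proof (HTg _ Tt) as Tb.
    generalize dependent (g s); generalize dependent (g t); intros b Tb a Ta.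
    rewrite finj, (H4 a b Ta Tb). unfold equiv, bullet. split.
    + intros H w [k ->]. rewrite <- (fg k). rewrite <- !Hneg, <- !Hmul, <- !Hneg.
      f_equal. apply H. exists (g k); auto.
    + intros H w [k ->]. apply finj.
      specialize (H (f (neg k)) (ex_intro _ (f k) (Hneg k))).
      rewrite <- !Hmul, <- !Hneg in H. auto.
Qed.

Lemma rep (T : Tfunctor) (HT1 : T_T1 T) (K : ida) (HK : is_TODA T K) :
  forall x : K, exists S, (forall y, S y -> T K y) /\ x = sup S.
Proof.
  destruct HK as (HI & H1 & H2 & H3 & H4).
  destruct (HT1 K HI) as (Ttest & Tone & Tmul & Tstar).
  pose proof HI as HI'. destruct HI' as (Hpo&Hlub&Hass&Hunit&Hdl&Hdr&Hss&Hsm&Hssup&_).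
  apply (H2 (fun x => exists S, (forall y, S y -> T K y) /\ x = sup S)).
  - intros x Tx; exists (fun y => y = x); split; [intros y ->; auto | symmetry; apply sup_single; auto].
  - intros x y [S [HS ->]] [S' [HS' ->]].
    exists (fun z => exists a b, S a /\ S' b /\ z = mul a b).
    split; [intros z (a&b&Ha&Hb&->); auto|]. apply le_anti; auto.
    + rewrite Hdr. apply sup_least; auto; intros y [a [Ha ->]]. rewrite Hdl.
      apply sup_least; auto; intros z [b [Hb ->]]. apply sup_ub; auto; exists a, b; auto.
    + apply sup_least; auto; intros z (a&b&Ha&Hb&->). apply le_trans with (mul (sup S) b); auto.
      * apply mul_mono_l; auto; apply sup_ub; auto.
      * apply mul_mono_r; auto; apply sup_ub; auto.
  - intros x [S [HS ->]]; exists (image star S); split; [intros y [z [Hz ->]]; auto | apply Hssup].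
  - intros S HS.
    exists (fun z => exists x Sx, S x /\ (forall y, Sx y -> T K y) /\ x = sup Sx /\ Sx z).
    split.
    + intros z (x&Sx&_&HSx&_&Hz); auto.
    + apply le_anti; auto.
      * apply sup_least; auto; intros x Hx. destruct (HS x Hx) as [Sx [HSx Ex]]. rewrite Ex.
        apply sup_least; auto; intros z Hz; apply sup_ub; auto; exists x, Sx; auto.
      * apply sup_least; auto; intros z (x&Sx&Hx&_&Ex&Hz). apply le_trans with x; auto.
        -- rewrite Ex; apply sup_ub; auto.
        -- apply sup_ub; auto.
Qed.

Lemma hK_ssup (T : Tfunctor) (HT1 : T_T1 T) (K : ida) (HK : is_TODA T K) :
  forall x : K, ssup T K (hK T K x) = x.
Proof.
  pose proof (proj1 HK) as HI. intro x.
  unfold ssup, hK. destruct (rep T HT1 K HK x) as [S [HS Ex]]. apply le_anti; auto.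
  - apply sup_least; auto; intros y [a [Ha ->]]; auto.
  - assert (H : le (sup S) (sup (fun y => exists a : {x : K | T K x}, le (proj1_sig a) x /\ y = proj1_sig a))).
    { apply sup_least; auto; intros y Hy; apply sup_ub; auto.
      exists (exist _ y (HS y Hy)); simpl; split; auto; rewrite Ex; apply sup_ub; auto. }
    rewrite <- Ex in H; exact H.
Qed.

Lemma K2 (T : Tfunctor) (K : ida) (HK : is_TODA T K) :
  forall (w : K) (U : K -> Prop), T K w -> (forall y, U y -> T K y) -> le w (sup U) -> U w.
Proof.
  destruct HK as (HI & H1 & H2 & H3 & H4). intros w U Tw HU Hle.
  assert (E : sup (fun z => U z \/ z = w) = sup U).
  { apply le_anti; auto.
    - apply sup_least; auto; intros y [Hy | ->]; auto; apply sup_ub; auto.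
    - apply sup_least; auto; intros y Hy; apply sup_ub; auto. }
  apply (proj1 (H3 _ _ (fun y Hy => match Hy with or_introl h => HU y h | or_intror e => eq_ind_r _ Tw e end) HU) E w).
  auto.
Qed.

Lemma ssup_hK (T : Tfunctor) (K : ida) (HK : is_TODA T K) :
  forall A, hK T K (ssup T K A) = A.
Proof.
  pose proof (proj1 HK) as HI. intro A.
  apply pred_ext; intros w; unfold hK, ssup; split.
  - intro H. apply (K2 T K HK) in H; auto; [| exact (proj2_sig w) | intros y [a [_ ->]]; exact (proj2_sig a)].
    destruct H as [a [Ha E]]; rewrite (sig_eq w a E); auto.
  - intro Ha; apply sup_ub; eauto.
Qed.

Lemma hK_le (T : Tfunctor) (HT1 : T_T1 T) (K : ida) (HK : is_TODA T K) :
  forall x y : K, le x y <-> le (i := PT T K) (hK T K x) (hK T K y).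
Proof.
  pose proof (proj1 HK) as HI. intros x y; simpl; split.
  - intros H a Ha; unfold hK in *; eapply le_trans; eauto.
  - intro H; rewrite <- (hK_ssup T HT1 K HK x); unfold ssup; apply sup_least; auto.
    intros z [a [Ha ->]]; apply H; auto.
Qed.

Lemma T_notbot (T : Tfunctor) (K : ida) (HK : is_TODA T K) (x : K) : T K x -> x <> bot K.
Proof.
  pose proof (proj1 HK) as HI. intros Tx E.
  assert (H : le x (sup (fun _ : K => False))) by (unfold bot in E; rewrite <- E; apply le_refl; auto).
  apply (K2 T K HK x (fun _ => False)) in H; auto; contradiction.
Qed.

Lemma T_atom (T : Tfunctor) (HT1 : T_T1 T) (K : ida) (HK : is_TODA T K) (x : K) :
  T K x -> is_atom x.
Proof.
  pose proof (proj1 HK) as HI. intro Tx. split; [apply (T_notbot T K HK); auto|].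
  intros y Hy. destruct (classic (le x y)) as [Hxy | Hxy].
  - right; apply le_anti; auto.
  - left. rewrite <- (hK_ssup T HT1 K HK y). unfold ssup, bot, hK. f_equal.
    apply pred_ext; intro z; split; [|contradiction]. intros [a [Ha ->]].
    assert (Hax : le (proj1_sig a) (sup (fun z => z = x))) by (rewrite sup_single; auto; eapply le_trans; eauto).
    apply (K2 T K HK) in Hax; auto; [| exact (proj2_sig a) | intros ? ->; auto].
    apply Hxy. rewrite <- Hax; auto.
Qed.

Lemma nonbot_has_T (T : Tfunctor) (HT1 : T_T1 T) (K : ida) (HK : is_TODA T K) (x : K) :
  x <> bot K -> exists a : {x : K | T K x}, le (proj1_sig a) x.
Proof.
  intro Hnb. destruct (classic (exists a : {x : K | T K x}, le (proj1_sig a) x)) as [H | Hn]; auto.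
  exfalso; apply Hnb. rewrite <- (hK_ssup T HT1 K HK x). unfold ssup, bot, hK; f_equal.
  apply pred_ext; intro z; split; [intros [a [Ha ->]]; apply Hn; eauto | contradiction].
Qed.

Lemma atom_T (T : Tfunctor) (HT1 : T_T1 T) (K : ida) (HK : is_TODA T K) (x : K) :
  is_atom x -> T K x.
Proof.
  intros [Hnb Hat]. destruct (nonbot_has_T T HT1 K HK x Hnb) as [a Ha].
  destruct (Hat _ Ha) as [E | E].
  - exfalso; apply (T_notbot T K HK _ (proj2_sig a) E).
  - rewrite <- E; exact (proj2_sig a).
Qed.

Lemma hK_morph (T : Tfunctor) (HT1 : T_T1 T) (K : ida) (HK : is_TODA T K) :
  @ida_morphism K (PT T K) (hK T K).
Proof.
  pose proof (proj1 HK) as HI.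
  pose proof (hK_ssup T HT1 K HK) as E.
  split; [|split; [|split; [|split]]].
  - intro S. apply pred_ext; intro w. simpl. split.
    + intro H. pose (U := fun z => exists x, S x /\ T K z /\ le z x).
      assert (HU : le (sup S) (sup U)).
      { apply sup_least; auto; intros x Hx. rewrite <- (E x). unfold ssup.
        apply sup_least; auto; intros z [a [Ha ->]]. apply sup_ub; auto.
        exists x; split; auto; split; [exact (proj2_sig a) | exact Ha]. }
      unfold hK in H. assert (H' : le (proj1_sig w) (sup U)) by (eapply le_trans; eauto).
      apply (K2 T K HK) in H'; [| exact (proj2_sig w) | intros y (x&_&Ty&_); auto].
      destruct H' as (x & Hx & _ & Hw). exists (hK T K x); split; [exists x; auto | exact Hw].
    + intros [A [[x [Hx ->]] Ha]]; unfold hK in *; apply le_trans with x; auto; apply sup_ub; auto.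
  - intros x y. simpl. rewrite !E. auto.
  - intros x. simpl. rewrite !E. auto.
  - apply pred_ext; intro c. simpl. unfold hK. split.
    + intro H. destruct (HT1 K HI) as (_ & Tone & _).
      destruct (T_atom T HT1 K HK _ Tone) as [_ Hat].
      destruct (Hat _ H) as [Eb | Eb]; auto.
      exfalso; apply (T_notbot T K HK _ (proj2_sig c) Eb).
    + intros ->; apply le_refl; auto.
  - intros x. simpl. rewrite !E. auto.
Qed.

Theorem lemma4p5 (T : Tfunctor)
  (HT1 : T_T1 T) (HT2 : T_T2 T) (HT3 : T_T3 T) (HT4 : T_T4 T)
  (K : ida) (HK : is_TODA T K) :
  (is_lattice K /\ is_atomic K /\ (forall x : K, is_atom x <-> T K x)) /\
  (is_TODA T (PT T K) /\ @ida_iso K (PT T K) (hK T K)).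
Proof.
  pose proof (proj1 HK) as HI.
  split; [split; [|split]|split].
  - split; [apply HI | split].
    + intros x y; exists (sup (pairset x y)); apply HI.
    + intros x y; exists (sup (fun z => le z x /\ le z y)); split.
      * intros v [-> | ->]; apply sup_least; auto; intros z [H1 H2]; auto.
      * intros z Hz; apply sup_ub; auto; split; apply Hz; [left | right]; auto.
  - intros x Hx. destruct (nonbot_has_T T HT1 K HK x Hx) as [a Ha].
    exists (proj1_sig a); split; auto. apply (T_atom T HT1 K HK). exact (proj2_sig a).
  - intro x; split; [apply (atom_T T HT1 K HK) | apply (T_atom T HT1 K HK)].
  - apply (@toda_transport T HT4 K (PT T K) (hK T K) (ssup T K)); auto.
    + apply hK_ssup; auto.
    + apply ssup_hK; auto.
    + apply hK_morph; auto.
    + apply hK_le; auto.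
  - split; [apply hK_morph; auto | split].
    + intros a b E. rewrite <- (hK_ssup T HT1 K HK a), E, hK_ssup; auto.
    + intro A; exists (ssup T K A); apply ssup_hK; auto.
Qed.
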